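(* Let $\tau_{\bm{\lambda}}$ be a tableau of shape $\bm{\lambda}\vdash n$. Then $W_{\tau_{\bm{\lambda}}}$ is contained in the span of the polynomials $\textup{sym}_{\textup{hook}(\tau_{\bm{\lambda}})}(\mathsf{x}^m)$, as $\mathsf{x}^m$ ranges over the square-free monomials of degree at most $d$.
   Context: Fix positive integers $n,d$. $\mathbb{R}[\mathsf{x}]$ is the polynomial ring in variables $\mathsf{x}_{ij}$, $1\le i<j\le n$ ($\mathsf{x}_{ji}:=\mathsf{x}_{ij}$). $\mathbb{R}[\mathcal{V}_n]=\mathbb{R}[\mathsf{x}]/\mathcal{I}_n$, with $\mathcal{I}_n$ generated by all $\mathsf{x}_{ij}^2-\mathsf{x}_{ij}$, identified as a vector space with the square-free polynomials; $V=\mathbb{R}[\mathcal{V}_n]_{\le d}$ is the space of square-free polynomials of degree at most $d$. A square-free monomial is $\mathsf{x}^m=\prod_{i<j}\mathsf{x}_{ij}^{m_{ij}}$ with $m_{ij}\in\{0,1\}$. $\mathfrak{S}_n$ acts by ring automorphisms with $\mathfrak{s}\cdot\mathsf{x}_{ij}=\mathsf{x}_{\mathfrak{s}(i)\mathfrak{s}(j)}$. $V=\bigoplus_{\bm{\lambda}}V_{\bm{\lambda}}$ is the isotypic decomposition ($V_{\bm{\lambda}}$ = span of all submodules isomorphic to the irreducible $S_{\bm{\lambda}}$). A tableau of shape $\bm{\lambda}=(\lambda_1,\lambda_2,\dots)$ is a bijective filling of the Young diagram of $\bm{\lambda}$ with $1,\dots,n$; the row group $\mathfrak{R}_\tau$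 of a tableau $\tau$ is the subgroup of $\mathfrak{S}_n$ preserving the label set of each row. $W_{\tau_{\bm{\lambda}}}:=V_{\bm{\lambda}}^{\mathfrak{R}_{\tau_{\bm{\lambda}}}}$, the elements of $V_{\bm{\lambda}}$ fixed by $\mathfrak{R}_{\tau_{\bm{\lambda}}}$. For a tableau $\tau$, $\textup{sym}_\tau(\mathsf{f}):=\frac1{|\mathfrak{R}_\tau|}\sum_{\mathfrak{s}\in\mathfrak{R}_\tau}\mathfrak{s}\cdot\mathsf{f}$. $\textup{hook}(\tau_{\bm{\lambda}})$ is the tableau of hook shape $(\lambda_1,1^{n-\lambda_1})$ whose first row equals the first row of $\tau_{\bm{\lambda}}$ and whose remaining labels are placed in the tail (first column below the first row) in increasing order. *)

(* Defs.v *)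
From HB Require Import structures.
From mathcomp Require Import all_boot all_order all_algebra all_fingroup.
From mathcomp Require Import reals.
Set Implicit Arguments. Unset Strict Implicit. Unset Printing Implicit Defensive.
Import GRing.Theory.
Local Open Scope ring_scope.

Definition is_partition (n : nat) (lam : seq nat) : bool :=
  [&& sorted geq lam, all (fun k => 0 < k)%N lam & sumn lam == n].

(* A tableau is a filling of the Young diagram by the labels 'I_n,
   given as the map label |-> (row, column) (0-indexed).  It is a tableau of
   shape [lam] iff this map is injective with image inside the diagram of
   [lam]; since the diagram has exactly n cells when lam |- n, the filling is
   then bijective. *)
Definition tableau n := {ffun 'I_n -> nat * nat}.

Definition is_tableau n (lam : seq nat) (t : tableau n) : Prop :=
  injective t /\ forall x, ((t x).2 < nth 0%N lam (t x).1)%N.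

Definition row_group n (t : tableau n) : {set {perm 'I_n}} :=
  [set s : {perm 'I_n} | [forall x, (t (s x)).1 == (t x).1]].
Definition col_group n (t : tableau n) : {set {perm 'I_n}} :=
  [set s : {perm 'I_n} | [forall x, (t (s x)).2 == (t x).2]].

(* hook(t): first row equal to the first row of t, remaining labels placed in
   increasing order in the first column below the first row. *)
Definition hook n (t : tableau n) : tableau n :=
  [ffun x => if (t x).1 == 0%N then (0%N, (t x).2)
             else (#|[set y | ((t y).1 != 0%N) && (y < x)%N]|.+1, 0%N)].

(* A variable x_ij (i<j) is the 2-element set {i,j}; a square-free monomial
   x^m is a set of variables.  Polynomials are coefficient functions on
   sets of subsets of 'I_n; elements of R[V_n] are those supported on genuine
   square-free monomials (all members of size 2). *)
Definition mono n := {set {set 'I_n}}.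
Definition sqpoly (R : nzRingType) n := {ffun mono n -> R^o}.

Definition sqfree_mono n (m : mono n) : bool := [forall A in m, #|A| == 2].

Definition inV (R : nzRingType) n (d : nat) (f : sqpoly R n) : Prop :=
  forall m, f m != 0 -> sqfree_mono m && (#|m| <= d)%N.

Definition xmono (R : nzRingType) n (m : mono n) : sqpoly R n :=
  [ffun m' => (m' == m)%:R].

Definition mono_act n (s : {perm 'I_n}) (m : mono n) : mono n :=
  [set s @: (A : {set 'I_n}) | A in m].
Definition pact (R : nzRingType) n (s : {perm 'I_n}) (f : sqpoly R n) : sqpoly R n :=
  [ffun m => f (mono_act s^-1 m)].

Definition sym (R : fieldType) n (t : tableau n) (f : sqpoly R n) : sqpoly R n :=
  (#|row_group t|%:R)^-1 *: \sum_(s in row_group t) pact s f.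

(* A tabloid is recorded by its row assignment label |-> row index. *)
Definition rowfun n := {ffun 'I_n -> 'I_n.+1}.
Definition tabspace (R : nzRingType) n := {ffun rowfun n -> R^o}.

Definition tabloid n (t : tableau n) : rowfun n := [ffun x => inord (t x).1].

Definition delta_tab (R : nzRingType) n (r : rowfun n) : tabspace R n :=
  [ffun r' => (r' == r)%:R].

(* permutation action on tabloids: s . {t} = {s t} (relabel i by s(i)) *)
Definition tact (R : nzRingType) n (s : {perm 'I_n}) (F : tabspace R n)
  : tabspace R n := [ffun r : rowfun n => F [ffun x => r (s x)]].

Definition polytabloid (R : nzRingType) n (t : tableau n) : tabspace R n :=
  \sum_(c in col_group t) ((-1) ^+ odd_perm c) *: tact c (delta_tab R (tabloid t)).

(* Specht module S^t = span of the polytabloids e_{s t} = s . e_t *)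
Definition in_specht (R : nzRingType) n (t : tableau n) (F : tabspace R n) : Prop :=
  exists a : {perm 'I_n} -> R,
    F = \sum_(s : {perm 'I_n}) a s *: tact s (polytabloid R t).

(* [phi] is linear, and restricted to the Specht module S^t it is an injective
   S_n-equivariant map into V; its image is thus a submodule of V isomorphic
   to S^t, and every such submodule arises this way. *)
Definition specht_embedding (R : nzRingType) n d (t : tableau n)
  (phi : tabspace R n -> sqpoly R n) : Prop :=
  [/\ forall (a : R) (F G : tabspace R n), phi (a *: F + G) = a *: phi F + phi G,
      forall F, in_specht t F -> inV d (phi F),
      forall F, in_specht t F -> phi F = 0 -> F = 0 &
      forall s F, in_specht t F -> phi (tact s F) = pact s (phi F)].

(* V_lambda (lambda = shape of t): span of all submodules of V isomorphic to
   the Specht module of shape lambda. *)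
Definition in_isotypic (R : nzRingType) n d (t : tableau n) (f : sqpoly R n) : Prop :=
  exists (k : nat) (phi : 'I_k -> tabspace R n -> sqpoly R n) (F : 'I_k -> tabspace R n),
    (forall i, specht_embedding d t (phi i) /\ in_specht t (F i)) /\
    f = \sum_(i < k) phi i (F i).

Definition in_W (R : nzRingType) n d (t : tableau n) (f : sqpoly R n) : Prop :=
  in_isotypic d t f /\ forall s, s \in row_group t -> pact s f = f.

Definition in_hook_span (R : fieldType) n d (t : tableau n) (f : sqpoly R n) : Prop :=
  exists c : mono n -> R,
    f = \sum_(m : mono n | sqfree_mono m && (#|m| <= d)%N)
          c m *: sym (hook t) (xmono R m).

(* Main.v *)
Require Import Defs.
From HB Require Import structures.
From mathcomp Require Import all_boot all_order all_algebra all_fingroup.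
From mathcomp Require Import reals.
Set Implicit Arguments. Unset Strict Implicit. Unset Printing Implicit Defensive.
Import GRing.Theory Num.Theory.
Local Open Scope ring_scope.

Lemma inV0 (R : nzRingType) n d : inV d (0 : sqpoly R n).
Proof. by move=> m; rewrite ffunE eqxx. Qed.

Lemma inVD (R : nzRingType) n d (f g : sqpoly R n) :
  inV d f -> inV d g -> inV d (f + g).
Proof.
move=> hf hg m; rewrite ffunE => H.
case: (boolP (f m == 0)) => [/eqP E|/hf //]; apply: hg.
by apply: contraNneq H => ->; rewrite E addr0.
Qed.

Lemma inW_inV (R : nzRingType) n d (t : tableau n) (f : sqpoly R n) :
  in_W d t f -> inV d f.
Proof.
move=> [[k [phi [F [H ->]]]] _].
apply: (big_ind (inV d)); [exact: inV0| exact: inVD|].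
move=> i _; have [[_ h _ _] hF] := H i; exact: h.
Qed.

Lemma hook_sub n (t : tableau n) : row_group (hook t) \subset row_group t.
Proof.
apply/subsetP => s; rewrite !inE => /forallP hs; apply/forallP => x.
have := hs x; rewrite !ffunE.
case: ifP => [/eqP h1|h1]; case: ifP => [/eqP h2|h2] //=.
- by rewrite h1 h2.
- move=> /eqP [] E.
  suff -> : s x = x by [].
  apply/eqP; case: (ltngtP (s x) x) => [Hlt|Hlt|/val_inj->//]; exfalso.
  + have : (#|[set y | ((t y).1 != 0%N) && (y < s x)%N]| <
            #|[set y | ((t y).1 != 0%N) && (y < x)%N]|)%N.
      apply: proper_card; apply/properP; split.
        by apply/subsetP => y; rewrite !inE => /andP[-> /ltn_trans]; apply.
      by exists (s x); rewrite !inE ?h1 ?Hlt ?ltnn //= ?h2.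
    by rewrite E ltnn => //.
  + have : (#|[set y | ((t y).1 != 0%N) && (y < x)%N]| <
            #|[set y | ((t y).1 != 0%N) && (y < s x)%N]|)%N.
      apply: proper_card; apply/properP; split.
        by apply/subsetP => y; rewrite !inE => /andP[-> /ltn_trans]; apply.
      by exists x; rewrite !inE ?h2 ?Hlt ?ltnn //= ?h1.
    by rewrite E ltnn => //.
Qed.

Theorem lemma3p2 (R : realType) (n d : nat) (lam : seq nat) (tau : tableau n) :
  (0 < n)%N -> (0 < d)%N ->
  is_partition n lam -> is_tableau lam tau ->
  forall f : sqpoly R n, in_W d tau f -> in_hook_span d tau f.
Proof.
move=> _ _ _ _ f hW.
have hV := inW_inV hW.
have hfix : forall s, s \in row_group (hook tau) -> forall m, f (mono_act s^-1 m) = f m.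
  move=> s hs m; have := (hW.2 s (subsetP (hook_sub tau) s hs)).
  by move/ffunP/(_ m); rewrite ffunE.
exists f; apply/ffunP => m'.
rewrite sum_ffunE.
have scE : forall a b : R^o, a *: b = a * b by [].
under eq_bigr => m _ do rewrite /sym !ffunE !sum_ffunE !scE mulr_sumr mulr_sumr.
rewrite exchange_big /=.
have -> : \sum_(j in row_group (hook tau))
    \sum_(i | sqfree_mono i && (#|i| <= d)%N)
       f i * ((#|row_group (hook tau)|%:R)^-1 * (pact j (xmono R i)) m')
  = \sum_(j in row_group (hook tau)) (#|row_group (hook tau)|%:R)^-1 * f m'.
  apply: eq_bigr => s hs.
  under eq_bigr => i _ do rewrite /pact /xmono !ffunE mulrCA.
  rewrite -mulr_sumr; congr (_ * _).
  rewrite -(hfix s hs m').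
  set m0 := mono_act s^-1 m'.
  case: (boolP (sqfree_mono m0 && (#|m0| <= d)%N)) => hP.
    rewrite (bigD1 m0) //= eqxx mulr1 big1 ?addr0 // => i /andP[_ /negbTE].
    by rewrite eq_sym => ->; rewrite mulr0.
  rewrite big1; last first.
    move=> i hi; case: eqP => [E|_]; last by rewrite mulr0.
    by rewrite E hi in hP.
  case: (eqVneq (f m0) 0) => // /hV; by rewrite (negbTE hP).
have N0 : (#|row_group (hook tau)|%:R : R) != 0.
  rewrite pnatr_eq0 -lt0n; apply/card_gt0P; exists 1%g; rewrite inE.
  by apply/forallP => x; rewrite perm1.
by rewrite sumr_const -mulrnAl -mulr_natl (mulfV N0) mul1r.
Qed.
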